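(* Let $\Sigma_n$ be an empty signature with sorts $S=\{\sigma_1,\dots,\sigma_n\}$, let $\Sigma^n_s$ be the signature with sorts $S$ and a single function symbol $s$ of arity $\sigma_1\to\sigma_1$, let $\mathcal{T}$ be a $\Sigma_n$-theory, and let $\mathcal{T}'$ be the $\Sigma^n_s$-theory axiomatized by $Ax(\mathcal{T})\cup\{\forall x.\,s(x)=x\}$, where $x$ is a variable of sort $\sigma_1$. Then $\mathcal{T}$ has the finite model property with respect to $S$ iff $\mathcal{T}'$ has the finite model property with respect to $S$; and $\mathcal{T}$ is stably finite with respect to $S$ iff $\mathcal{T}'$ is stably finite with respect to $S$.
   Context: An empty signature has no function symbols and only equality predicates (interpreted as identity). A $\Sigma$-interpretation is a structure (nonempty domain $\tau^{\mathcal{A}}$ per sort $\tau$) plus values for variables; a $\Sigma$-theory $\mathcal{T}$ is the class of all $\Sigma$-interpretations satisfying a set $Ax(\mathcal{T})$ of closed formulas (its $\mathcal{T}$-interpretations); $\mathcal{T}$-satisfiable means satisfied by some $\mathcal{T}$-interpretation. Finite model property w.r.t. $S$: every $\mathcal{T}$-satisfiable quantifier-free formula is satisfied by a $\mathcal{T}$-interpretation $\mathcal{A}$ with $\tau^{\mathcal{A}}$ finite for each $\tau\in S$. Stably finite w.r.t. $S$: for every quantifier-free $\phi$ and $\mathcal{T}$-interpretation $\mathcal{A}$ satisfying $\phi$, some $\mathcal{T}$-interpretation $\mathcal{B}$ satisfies $\phi$ with $|\tau^{\mathcal{B}}|$ finite and $|\tau^{\mathcal{B}}|\le|\tau^{\mathcal{A}}|$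 for each $\tau\in S$. *)

(* Defs.v *)
From mathcomp Require Import all_boot.

(** The only predicate
    symbol is equality (interpreted as identity). *)
Record signature := Signature {
  sort : Type;
  sort_dec : forall a b : sort, {a = b} + {a <> b};
  fsym : Type;
  farity : fsym -> seq sort;
  fcod : fsym -> sort }.

Inductive term (S : signature) : sort S -> Type :=
| Var : forall t : sort S, nat -> term S t
| App : forall f : fsym S, terms S (@farity S f) -> term S (@fcod S f)
with terms (S : signature) : seq (sort S) -> Type :=
| TNil : terms S [::]
| TCons : forall (t : sort S) (l : seq (sort S)), term S t -> terms S l -> terms S (t :: l).
Arguments sort_dec {s} a b.
Arguments farity {s} f.
Arguments fcod {s} f.
Arguments Var {S} t _.
Arguments App {S} f _.
Arguments TNil {S}.
Arguments TCons {S t l} _ _.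

Inductive formula (S : signature) : Type :=
| FTrue : formula S
| FFalse : formula S
| FEq : forall t : sort S, term S t -> term S t -> formula S
| FNot : formula S -> formula S
| FAnd : formula S -> formula S -> formula S
| FOr : formula S -> formula S -> formula S
| FImp : formula S -> formula S -> formula S
| FAll : sort S -> nat -> formula S -> formula S
| FEx : sort S -> nat -> formula S -> formula S.
Arguments FTrue {S}.
Arguments FFalse {S}.
Arguments FEq {S} t _ _.
Arguments FNot {S} _.
Arguments FAnd {S} _ _.
Arguments FOr {S} _ _.
Arguments FImp {S} _ _.
Arguments FAll {S} _ _ _.
Arguments FEx {S} _ _ _.

Set Implicit Arguments.
Unset Strict Implicit.
Unset Printing Implicit Defensive.

Fixpoint qfree (S : signature) (p : formula S) : bool :=
  match p with
  | FTrue | FFalse | FEq _ _ _ => true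
  | FNot q => qfree q
  | FAnd q r | FOr q r | FImp q r => qfree q && qfree r
  | FAll _ _ _ | FEx _ _ _ => false
  end.

Fixpoint term_has_var (S : signature) (s : sort S) (x : nat) (t0 : sort S)
  (t : term S t0) {struct t} : bool :=
  match t with
  | Var t1 y => (if sort_dec t1 s then true else false) && (y == x)
  | App f ts => terms_has_var s x ts
  end
with terms_has_var (S : signature) (s : sort S) (x : nat) (l : seq (sort S))
  (ts : terms S l) {struct ts} : bool :=
  match ts with
  | TNil => false
  | TCons _ _ t ts' => term_has_var s x t || terms_has_var s x ts'
  end.

Fixpoint free_in (S : signature) (s : sort S) (x : nat) (p : formula S) : bool :=
  match p with
  | FTrue | FFalse => false
  | FEq _ t1 t2 => term_has_var s x t1 || term_has_var s x t2
  | FNot q => free_in s x q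
  | FAnd q r | FOr q r | FImp q r => free_in s x q || free_in s x r
  | FAll t y q | FEx t y q =>
      if (if sort_dec t s then true else false) && (y == x) then false
      else free_in s x q
  end.

Definition closed_formula (S : signature) (p : formula S) : Prop :=
  forall (s : sort S) (x : nat), free_in s x p = false.

Fixpoint args (S : signature) (D : sort S -> Type) (l : seq (sort S)) : Type :=
  match l with
  | [::] => unit
  | t :: l' => (D t * args D l')%type
  end.

Record structure (S : signature) := Structure {
  dom : sort S -> Type;
  dom_ne : forall t, inhabited (dom t);
  fint : forall f : fsym S, args dom (farity f) -> dom (fcod f) }.

Record interp (S : signature) := Interp {
  istr : structure S;
  ival : forall t : sort S, nat -> dom istr t }.

Fixpoint eval_term (S : signature) (M : structure S)
  (v : forall t : sort S, nat -> dom M t) (t0 : sort S) (t : term S t0)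
  {struct t} : dom M t0 :=
  match t in term _ t1 return dom M t1 with
  | Var t1 y => v t1 y
  | App f ts => @fint S M f (eval_terms v ts)
  end
with eval_terms (S : signature) (M : structure S)
  (v : forall t : sort S, nat -> dom M t) (l : seq (sort S)) (ts : terms S l)
  {struct ts} : args (dom M) l :=
  match ts in terms _ l1 return args (dom M) l1 with
  | TNil => tt
  | TCons _ _ t ts' => (eval_term v t, eval_terms v ts')
  end.

Definition upd (S : signature) (D : sort S -> Type)
  (v : forall t : sort S, nat -> D t) (s : sort S) (x : nat) (a : D s) :
  forall t : sort S, nat -> D t :=
  fun t y =>
    match sort_dec s t with
    | left e => if y == x then eq_rect s D a t e else v t y
    | right _ => v t y
    end.

Fixpoint sat (S : signature) (M : structure S)
  (v : forall t : sort S, nat -> dom M t) (p : formula S) : Prop :=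
  match p with
  | FTrue => True
  | FFalse => False
  | FEq _ t1 t2 => eval_term v t1 = eval_term v t2
  | FNot q => ~ sat v q
  | FAnd q r => sat v q /\ sat v r
  | FOr q r => sat v q \/ sat v r
  | FImp q r => sat v q -> sat v r
  | FAll s x q => forall a : dom M s, sat (upd v x a) q
  | FEx s x q => exists a : dom M s, sat (upd v x a) q
  end.

Definition satisfies (S : signature) (I : interp S) (p : formula S) : Prop :=
  sat (ival I) p.

Definition is_T_interp (S : signature) (Ax : formula S -> Prop) (I : interp S) :
  Prop := forall p, Ax p -> satisfies I p.

Definition finite_type (T : Type) : Prop :=
  exists (n : nat) (f : 'I_n -> T), forall x : T, exists i, f i = x.

Definition card_le (T U : Type) : Prop := exists f : T -> U, injective f.

Definition has_fmp (S : signature) (Ax : formula S -> Prop) (Ss : sort S -> Prop)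
  : Prop :=
  forall p : formula S, qfree p ->
    (exists A : interp S, is_T_interp Ax A /\ satisfies A p) ->
    exists B : interp S, is_T_interp Ax B /\ satisfies B p /\
      forall t, Ss t -> finite_type (dom (istr B) t).

Definition stably_finite (S : signature) (Ax : formula S -> Prop)
  (Ss : sort S -> Prop) : Prop :=
  forall (p : formula S) (A : interp S), qfree p ->
    is_T_interp Ax A -> satisfies A p ->
    exists B : interp S, is_T_interp Ax B /\ satisfies B p /\
      forall t, Ss t -> finite_type (dom (istr B) t) /\
                        card_le (dom (istr B) t) (dom (istr A) t).

Definition SigE (n : nat) : signature :=
  {| sort := 'I_n;
     sort_dec := fun a b => eq_comparable a b;
     fsym := Empty_set;
     farity := fun f => match f with end;
     fcod := fun f => match f with end |}.

Definition SigS (n : nat) (s1 : 'I_n) : signature :=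
  {| sort := 'I_n;
     sort_dec := fun a b => eq_comparable a b;
     fsym := unit;
     farity := fun _ => [:: s1];
     fcod := fun _ => s1 |}.

Definition emb_term (n : nat) (s1 : 'I_n) (t0 : 'I_n) (t : term (SigE n) t0) :
  term (SigS s1) t0 :=
  match t in term _ t1 return term (SigS s1) t1 with
  | Var t1 y => @Var (SigS s1) t1 y
  | App f _ => match f with end
  end.

Fixpoint emb_form (n : nat) (s1 : 'I_n) (p : formula (SigE n)) :
  formula (SigS s1) :=
  match p with
  | FTrue => @FTrue (SigS s1)
  | FFalse => @FFalse (SigS s1)
  | FEq t a b => @FEq (SigS s1) t (emb_term s1 a) (emb_term s1 b)
  | FNot q => @FNot (SigS s1) (emb_form s1 q)
  | FAnd q r => @FAnd (SigS s1) (emb_form s1 q) (emb_form s1 r)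
  | FOr q r => @FOr (SigS s1) (emb_form s1 q) (emb_form s1 r)
  | FImp q r => @FImp (SigS s1) (emb_form s1 q) (emb_form s1 r)
  | FAll t x q => @FAll (SigS s1) t x (emb_form s1 q)
  | FEx t x q => @FEx (SigS s1) t x (emb_form s1 q)
  end.

Definition ax_id (n : nat) (s1 : 'I_n) : formula (SigS s1) :=
  @FAll (SigS s1) s1 0
    (@FEq (SigS s1) s1
       (@App (SigS s1) tt (@TCons (SigS s1) s1 [::] (@Var (SigS s1) s1 0) (@TNil (SigS s1))))
       (@Var (SigS s1) s1 0)).

Definition AxS (n : nat) (s1 : 'I_n) (Ax : formula (SigE n) -> Prop) :
  formula (SigS s1) -> Prop :=
  fun q => (exists p, Ax p /\ q = emb_form s1 p) \/ q = ax_id s1.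

(* Main.v *)
Require Import Defs.
From mathcomp Require Import all_boot.
Set Implicit Arguments.
Unset Strict Implicit.

Scheme term_mind := Induction for term Sort Prop
  with terms_mind := Induction for terms Sort Prop.

Definition thd (n : nat) (l : seq 'I_n) (us : terms (SigE n) l) :
  match l return Type with t :: _ => term (SigE n) t | [::] => unit end :=
  match us in terms _ l1 return match l1 return Type with t :: _ => term (SigE n) t | [::] => unit end with
  | TNil => tt
  | TCons _ _ t _ => t
  end.

Fixpoint strip_term (n : nat) (s1 : 'I_n) (t0 : 'I_n) (t : term (SigS s1) t0) {struct t}
  : term (SigE n) t0 :=
  match t in term _ t1 return term (SigE n) t1 with
  | Var t1 y => @Var (SigE n) t1 y
  | App f ts => @thd n [:: s1] (strip_terms ts)
  end
with strip_terms (n : nat) (s1 : 'I_n) (l : seq 'I_n) (ts : terms (SigS s1) l) {struct ts}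
  : terms (SigE n) l :=
  match ts in terms _ l1 return terms (SigE n) l1 with
  | TNil => @TNil (SigE n)
  | TCons _ _ t ts' => @TCons (SigE n) _ _ (strip_term t) (strip_terms ts')
  end.

Fixpoint strip_form (n : nat) (s1 : 'I_n) (p : formula (SigS s1)) : formula (SigE n) :=
  match p with
  | FTrue => @FTrue (SigE n)
  | FFalse => @FFalse (SigE n)
  | FEq t a b => @FEq (SigE n) t (strip_term a) (strip_term b)
  | FNot q => @FNot (SigE n) (strip_form q)
  | FAnd q r => @FAnd (SigE n) (strip_form q) (strip_form r)
  | FOr q r => @FOr (SigE n) (strip_form q) (strip_form r)
  | FImp q r => @FImp (SigE n) (strip_form q) (strip_form r)
  | FAll t x q => @FAll (SigE n) t x (strip_form q)
  | FEx t x q => @FEx (SigE n) t x (strip_form q)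
  end.

Lemma qfree_strip n (s1 : 'I_n) (p : formula (SigS s1)) : qfree p -> qfree (strip_form p).
Proof. elim: p => //=; by move=> q IHq r IHr /andP [/IHq -> /IHr ->]. Qed.

Lemma qfree_emb n (s1 : 'I_n) (p : formula (SigE n)) : qfree p -> qfree (emb_form s1 p).
Proof. elim: p => //=; by move=> q IHq r IHr /andP [/IHq -> /IHr ->]. Qed.

Definition extendE n (s1 : 'I_n) (M : structure (SigE n)) : structure (SigS s1) :=
  @Structure (SigS s1) (dom M) (@dom_ne _ M) (fun _ a => a.1).

Lemma thd_eval n (N : structure (SigE n)) (v : forall t : 'I_n, nat -> dom N t)
  (l : seq 'I_n) (us : terms (SigE n) l) :
  match l return terms (SigE n) l -> Prop with
  | [::] => fun _ => True
  | t :: l' => fun us => (@eval_terms (SigE n) N v _ us).1 = @eval_term (SigE n) N v _ (thd us)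
  end us.
Proof. by case: us. Qed.


Fixpoint cast_args n (s1 : 'I_n) (D : 'I_n -> Type) (l : seq 'I_n) :
  @args (SigE n) D l -> @args (SigS s1) D l :=
  match l return @args (SigE n) D l -> @args (SigS s1) D l with
  | [::] => fun x => x
  | t :: l' => fun x => (x.1, @cast_args n s1 D l' x.2)
  end.

Lemma strip_eval n (s1 : 'I_n) (M : structure (SigS s1))
  (hid : forall a : dom M s1, @fint (SigS s1) M tt (a, tt) = a)
  (F : forall f : Defs.fsym (SigE n), @args (SigE n) (dom M) (@farity (SigE n) f) -> dom M (@fcod (SigE n) f))
  (v : forall t : 'I_n, nat -> dom M t) t0 (t : term (SigS s1) t0) :
  @eval_term (SigS s1) M v _ t = @eval_term (SigE n) (@Structure (SigE n) (dom M) (@dom_ne _ M) F) v _ (strip_term t).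
Proof.
pose N := @Structure (SigE n) (dom M) (@dom_ne _ M) F.
elim t using term_mind with
  (P0 := fun l ts => @eval_terms (SigS s1) M v l ts = @cast_args n s1 (dom M) l (@eval_terms (SigE n) N v l (strip_terms ts))) => //=.
- move=> f ts IH. rewrite IH.
  have := @thd_eval n N v _ (strip_terms ts). simpl. move=> <-.
  case: f; case: (eval_terms _ _) => a []. exact: hid.
- by move=> t1 l t' -> ts' ->.
Qed.

Lemma strip_sat n (s1 : 'I_n) (M : structure (SigS s1))
  (hid : forall a : dom M s1, @fint (SigS s1) M tt (a, tt) = a)
  (F : forall f : Defs.fsym (SigE n), @args (SigE n) (dom M) (@farity (SigE n) f) -> dom M (@fcod (SigE n) f))
  (p : formula (SigS s1)) (v : forall t : 'I_n, nat -> dom M t) :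
  @sat (SigS s1) M v p <-> @sat (SigE n) (@Structure (SigE n) (dom M) (@dom_ne _ M) F) v (strip_form p).
Proof.
elim: p v => //=.
- move=> t a b v. rewrite !(strip_eval hid F). by [].
- move=> q IH v. move: (IH v); tauto.
- move=> q IHq r IHr v. move: (IHq v) (IHr v); tauto.
- move=> q IHq r IHr v. move: (IHq v) (IHr v); tauto.
- move=> q IHq r IHr v. move: (IHq v) (IHr v); tauto.
- move=> t x q IH v. split=> H a; apply/IH; exact: H.
- move=> t x q IH v. split=> [[a H]|[a H]]; exists a; apply/IH; exact: H.
Qed.

Lemma emb_eval n (s1 : 'I_n) (M : structure (SigS s1))
  (F : forall f : Defs.fsym (SigE n), @args (SigE n) (dom M) (@farity (SigE n) f) -> dom M (@fcod (SigE n) f))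
  (v : forall t : 'I_n, nat -> dom M t) t0 (t : term (SigE n) t0) :
  @eval_term (SigS s1) M v _ (emb_term s1 t) = @eval_term (SigE n) (@Structure (SigE n) (dom M) (@dom_ne _ M) F) v _ t.
Proof. case: t => [//|[]]. Qed.

Lemma emb_sat n (s1 : 'I_n) (M : structure (SigS s1))
  (F : forall f : Defs.fsym (SigE n), @args (SigE n) (dom M) (@farity (SigE n) f) -> dom M (@fcod (SigE n) f))
  (p : formula (SigE n)) (v : forall t : 'I_n, nat -> dom M t) :
  @sat (SigS s1) M v (emb_form s1 p) <-> @sat (SigE n) (@Structure (SigE n) (dom M) (@dom_ne _ M) F) v p.
Proof.
elim: p v => //=.
- move=> t a b v. rewrite !(emb_eval F). by [].
- move=> q IH v. move: (IH v); tauto.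
- move=> q IHq r IHr v. move: (IHq v) (IHr v); tauto.
- move=> q IHq r IHr v. move: (IHq v) (IHr v); tauto.
- move=> q IHq r IHr v. move: (IHq v) (IHr v); tauto.
- move=> t x q IH v. split=> H a; apply/IH; exact: H.
- move=> t x q IH v. split=> [[a H]|[a H]]; exists a; apply/IH; exact: H.
Qed.

Definition emptyF n (D : 'I_n -> Type) :
  forall f : Defs.fsym (SigE n), @args (SigE n) D (@farity (SigE n) f) -> D (@fcod (SigE n) f) :=
  fun f => match f with end.

Definition forgetS n (s1 : 'I_n) (M : structure (SigS s1)) : structure (SigE n) :=
  @Structure (SigE n) (dom M) (@dom_ne _ M) (@emptyF n (dom M)).

Lemma upd_same n (s1 : 'I_n) (D : 'I_n -> Type) (v : forall t : 'I_n, nat -> D t) x (a : D s1) :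
  @upd (SigS s1) D v s1 x a s1 x = a.
Proof.
rewrite /upd /=. case: (eq_comparable s1 s1) => [e|//]. rewrite eqxx.
by have -> : e = erefl by apply: eq_irrelevance.
Qed.

Lemma hid_of n (s1 : 'I_n) Ax (M : structure (SigS s1)) v :
  is_T_interp (@AxS n s1 Ax) (@Interp (SigS s1) M v) ->
  forall a : dom M s1, @fint (SigS s1) M tt (a, tt) = a.
Proof.
move=> H a. have := H (ax_id s1) (or_intror erefl) a. rewrite /= !upd_same. by [].
Qed.

Lemma forget_T n (s1 : 'I_n) Ax (M : structure (SigS s1)) v :
  is_T_interp (@AxS n s1 Ax) (@Interp (SigS s1) M v) ->
  is_T_interp Ax (@Interp (SigE n) (forgetS M) v).
Proof.
move=> H q Hq. rewrite /satisfies /=. apply/(emb_sat (s1:=s1) (@emptyF n (dom M))).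
apply: H. left. by exists q.
Qed.

Lemma extend_T n (s1 : 'I_n) Ax (D : 'I_n -> Type) Dne Fb v :
  is_T_interp Ax (@Interp (SigE n) (@Structure (SigE n) D Dne Fb) v) ->
  is_T_interp (@AxS n s1 Ax) (@Interp (SigS s1) (extendE s1 (@Structure (SigE n) D Dne Fb)) v).
Proof.
move=> H q [[q0 [Hq0 ->]]| ->].
- rewrite /satisfies /=. apply/(emb_sat (M:=extendE s1 (@Structure (SigE n) D Dne Fb)) Fb).
  exact: H.
- by move=> a.
Qed.

Theorem theorem9 (n : nat) (hn : 0 < n) (Ax : formula (SigE n) -> Prop)
  (hAx : forall p, Ax p -> closed_formula p) :
  (has_fmp Ax (fun _ => True) <->
     has_fmp (@AxS n (Ordinal hn) Ax) (fun _ => True)) /\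
  (stably_finite Ax (fun _ => True) <->
     stably_finite (@AxS n (Ordinal hn) Ax) (fun _ => True)).
Proof.
set s1 := Ordinal hn.
split; split.
- move=> HT p' qp' [[M' v'] [HA' Hp']].
  have hid := hid_of HA'.
  have [] := HT (strip_form p') (qfree_strip qp').
    exists (@Interp (SigE n) (forgetS M') v'); split; first exact: forget_T HA'.
    rewrite /satisfies /=. by apply/(strip_sat hid).
  move=> [[D Dne Fb] v] [HB [HpB Hfin]].
  exists (@Interp (SigS s1) (extendE s1 (@Structure (SigE n) D Dne Fb)) v).
  split; first exact: extend_T HB.
  split; last exact: Hfin.
  rewrite /satisfies /=.
  apply/(strip_sat (M:=extendE s1 (@Structure (SigE n) D Dne Fb)) (fun a => erefl) Fb).
  exact: HpB.
- move=> HT' p qp [[[D Dne Fa] v] [HA Hp]].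
  have [] := HT' (emb_form s1 p) (qfree_emb s1 qp).
    exists (@Interp (SigS s1) (extendE s1 (@Structure (SigE n) D Dne Fa)) v).
    split; first exact: extend_T HA.
    rewrite /satisfies /=.
    by apply/(emb_sat (M:=extendE s1 (@Structure (SigE n) D Dne Fa)) Fa).
  move=> [M' v'] [HB [HpB Hfin]].
  exists (@Interp (SigE n) (forgetS M') v'); split; first exact: forget_T HB.
  split; last exact: Hfin.
  rewrite /satisfies /=. by apply/(emb_sat (s1:=s1) (@emptyF n (dom M'))).
- move=> HT p' [M' v'] qp' HA' Hp'.
  have hid := hid_of HA'.
  have [] := HT (strip_form p') (@Interp (SigE n) (forgetS M') v') (qfree_strip qp').
  + exact: forget_T HA'.
  + rewrite /satisfies /=. by apply/(strip_sat hid).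
  move=> [[D Dne Fb] v] [HB [HpB Hfin]].
  exists (@Interp (SigS s1) (extendE s1 (@Structure (SigE n) D Dne Fb)) v).
  split; first exact: extend_T HB.
  split; last exact: Hfin.
  rewrite /satisfies /=.
  apply/(strip_sat (M:=extendE s1 (@Structure (SigE n) D Dne Fb)) (fun a => erefl) Fb).
  exact: HpB.
- move=> HT' p [[D Dne Fa] v] qp HA Hp.
  have [] := HT' (emb_form s1 p) (@Interp (SigS s1) (extendE s1 (@Structure (SigE n) D Dne Fa)) v) (qfree_emb s1 qp).
  + exact: extend_T HA.
  + rewrite /satisfies /=.
    by apply/(emb_sat (M:=extendE s1 (@Structure (SigE n) D Dne Fa)) Fa).
  move=> [M' v'] [HB [HpB Hfin]].
  exists (@Interp (SigE n) (forgetS M') v'); split; first exact: forget_T HB.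
  split; last exact: Hfin.
  rewrite /satisfies /=. by apply/(emb_sat (s1:=s1) (@emptyF n (dom M'))).
Qed.
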